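(* For every integer $n \ge 1$, $$\sum_{k=2}^{\infty} \log\Big( \sum_{j=1}^{n} j^{-k} \Big) < 1.$$
   Context: $\log$ denotes the natural logarithm. *)

(* Defs.v *)
From Stdlib Require Import Reals.
Open Scope R_scope.

(* power_sum n k = sum_{j=1}^{n} j^{-k}  (for n >= 1) *)
Definition power_sum (n k : nat) : R :=
  sum_f_R0 (fun i => / (INR (i + 1) ^ k)) (n - 1).

(* term m of the series sum_{k>=2} log(...), indexed by k = m + 2 *)
Definition series_term (n m : nat) : R := ln (power_sum n (m + 2)).

(* Main.v *)
Require Import Defs.
From Stdlib Require Import Reals Lra Lia.
Open Scope R_scope.

Definition A (p k : nat) : R := sum_f_R0 (fun i => / (INR (i + 1) ^ k)) p.

Lemma A_ge1 p k : 1 <= A p k.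
Proof.
  induction p as [|p IH]; unfold A in *.
  - simpl. rewrite pow1, Rinv_1. lra.
  - rewrite tech5.
    assert (0 < / INR (S p + 1) ^ k).
    { apply Rinv_0_lt_compat, pow_lt. apply lt_0_INR; lia. }
    lra.
Qed.

Lemma ln_facts a : 1 <= a -> 0 <= ln a /\ ln a <= a - 1.
Proof.
  intros Ha. split.
  - destruct (Req_dec a 1) as [->|H]. rewrite ln_1; lra.
    rewrite <- ln_1. left. apply ln_increasing; lra.
  - pose proof (exp_ineq1_le (a - 1)) as He.
    destruct (Req_dec a (exp (a-1))) as [E|E].
    + rewrite E at 1. rewrite ln_exp. lra.
    + rewrite <- (ln_exp (a-1)). left. apply ln_increasing; lra.
Qed.

Lemma geom_bound (x : R) M : 0 <= x < 1 ->
  sum_f_R0 (fun m => x ^ (m + 2)) M <= x ^ 2 / (1 - x).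
Proof.
  intros Hx.
  assert (E : sum_f_R0 (fun m => x ^ (m + 2)) M = x^2 * sum_f_R0 (fun m => x ^ m) M).
  { rewrite scal_sum. apply sum_eq. intros i _. rewrite pow_add. ring. }
  rewrite E, tech3 by lra.
  assert (0 <= x ^ S M) by (apply pow_le; lra).
  assert (0 <= x ^ 2) by (apply pow_le; lra).
  unfold Rdiv. rewrite <- Rmult_assoc.
  apply Rmult_le_compat_r. left; apply Rinv_0_lt_compat; lra.
  nra.
Qed.

Lemma main_bound p M :
  sum_f_R0 (fun m => A p (m + 2) - 1) M <= 1 - / INR (p + 1).
Proof.
  induction p as [|p IH].
  - simpl. rewrite Rinv_1.
    assert (E : sum_f_R0 (fun m => A 0 (m + 2) - 1) M = sum_f_R0 (fun _ => 0) M).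
    { apply sum_eq. intros i _. unfold A; simpl. rewrite pow1, Rinv_1. ring. }
    rewrite E. assert (sum_f_R0 (fun _ => 0) M = 0).
    { clear E; induction M; simpl; [lra| rewrite IHM; lra]. }
    lra.
  - set (x := / INR (S p + 1)).
    assert (E : sum_f_R0 (fun m => A (S p) (m + 2) - 1) M =
       sum_f_R0 (fun m => A p (m + 2) - 1) M + sum_f_R0 (fun m => x ^ (m + 2)) M).
    { rewrite <- sum_plus. apply sum_eq. intros i _. unfold A. rewrite tech5.
      unfold x. rewrite pow_inv. ring. }
    rewrite E.
    assert (Hp : 0 < INR (p + 1)) by (apply lt_0_INR; lia).
    assert (Hs : INR (S p + 1) = INR (p + 1) + 1) by (rewrite <- S_INR; f_equal; lia).
    assert (Hx : 0 <= x < 1).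
    { unfold x. rewrite Hs. split. left; apply Rinv_0_lt_compat; lra.
      apply Rmult_lt_reg_l with (INR (p+1) + 1). lra.
      rewrite Rinv_r by lra. lra. }
    pose proof (geom_bound x M Hx).
    assert (x ^ 2 / (1 - x) = / INR (p + 1) - / INR (S p + 1)).
    { unfold x. rewrite Hs. field. lra. }
    unfold x in *. lra.
Qed.

Theorem mainTheorem3 (n : nat) (hn : (1 <= n)%nat) :
  exists l : R, infinite_sum (series_term n) l /\ l < 1.
Proof.
  destruct n as [|p]; [lia|].
  assert (Ht : forall m, series_term (S p) m = ln (A p (m + 2))).
  { intros m. unfold series_term, power_sum, A. do 2 f_equal. lia. }
  assert (Hpos : forall m, 0 <= series_term (S p) m).
  { intros m. rewrite Ht. apply ln_facts, A_ge1. }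
  assert (Hb : forall M, sum_f_R0 (series_term (S p)) M <= 1 - / INR (p + 1)).
  { intros M. eapply Rle_trans; [|apply (main_bound p M)].
    apply sum_Rle. intros m _. rewrite Ht. apply ln_facts, A_ge1. }
  assert (Hg : Un_growing (sum_f_R0 (series_term (S p)))).
  { intros M. rewrite tech5. pose proof (Hpos (S M)). lra. }
  assert (Hub : has_ub (sum_f_R0 (series_term (S p)))).
  { exists (1 - / INR (p + 1)). intros y [M ->]. apply Hb. }
  destruct (growing_cv _ Hg Hub) as [l Hl].
  exists l. split. exact Hl.
  assert (Hp : 0 < / INR (p + 1)) by (apply Rinv_0_lt_compat, lt_0_INR; lia).
  destruct (Rle_lt_dec l (1 - / INR (p + 1))) as [H|H]. lra.
  exfalso. destruct (Hl (l - (1 - / INR (p + 1)))) as [N HN]. lra.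
  specialize (HN N (Nat.le_refl N)). specialize (Hb N).
  unfold Rdist in HN. apply Rabs_def2 in HN. lra.
Qed.
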